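(* Let $\mathcal{B}$ be a history-deterministic generalised coBüchi automaton recognising a language $L\subseteq\Sigma^\omega$. Let $\mathcal{A}_{\min}$ be a nice, safe minimal and safe centralised history-deterministic coBüchi automaton recognising $L$, with safe components having state sets $S_1,\dots,S_k$. Let $R_1,\dots,R_m$ be the distinct residuals of $L$, let $Q^{R_j}$ be the set of states of $\mathcal{A}_{\min}$ whose language (taken as initial state) is $R_j$, and $n_j=\max_{1\le i\le k}|S_i\cap Q^{R_j}|$. Then $\mathcal{B}$ has at least $n_1+n_2+\cdots+n_m$ states (that is, at least as many states as the automaton $\mathcal{A}_{\mathrm{gen}}$ obtained by taking $n_j$ copies of the state for each residual $R_j$).
   Context: An automaton is a tuple $(Q,\Sigma,q_{\mathrm{init}},\Delta,\Gamma,\mathrm{col},W)$ with finite state set, finite input alphabet $\Sigma$, initial state, transitions $\Delta\subseteq Q\times\Sigma\times Q$, output alphabet $\Gamma$, labelling $\mathrm{col}:\Delta\to\Gamma$, acceptance condition $W\subseteq\Gamma^\omega$. A run on $w=a_1a_2\cdots$ is a sequence $(q_0,a_1,q_1)(q_1,a_2,q_2)\cdots$ of transitions with $q_0=q_{\mathrm{init}}$, accepting if its label sequence is in $W$; $\mathcal{L}(\mathcal{A})$ is the set of words with an accepting run. With a finite colour set $C$ and $\Gamma=2^C$, generalised coBüchi means $W=\{x : \text{some } c\in C \text{ occurs in only finitely many letters of } x\}$; a coBüchi automaton is the case $C=\{1\}$, its coBüchi transitions being those labelled $\{1\}$. A resolver is a map $\sigma:\Sigma^+\to\Delta$ such that for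 every $w=a_0a_1\cdots$, $\sigma(a_0)\sigma(a_0a_1)\cdots$ is a run on $w$, accepting whenever $w\in\mathcal{L}(\mathcal{A})$; history-deterministic means a resolver exists. The residual of $L$ with respect to $u\in\Sigma^*$ is $u^{-1}L=\{w : uw\in L\}$. For a coBüchi automaton: $\mathcal{A}_{\mathrm{safe}}$ is obtained by deleting coBüchi transitions; a safe component is a strongly connected component of $\mathcal{A}_{\mathrm{safe}}$; the safe language of $q$ is the set of words with an infinite path from $q$ in $\mathcal{A}_{\mathrm{safe}}$; two states are equivalent if the automaton started from each recognises the same language. Semantically deterministic: $(q,a,p_1),(q,a,p_2)\in\Delta$ implies $p_1,p_2$ equivalent; normal form: transitions between different safe components are coBüchi transitions; safe deterministic: $\mathcal{A}_{\mathrm{safe}}$ deterministic; nice: all states reachable, semantically deterministic, normal form, safe deterministic. Safe centralised: equivalent states with inclusion-comparable safe languages lie in the same safe component; safe minimal: equivalent states with equal safe languages are equal. *)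

(* Defs.v *)
From Stdlib Require Import ClassicalDescription.
From mathcomp Require Import all_boot.

Set Implicit Arguments.
Unset Strict Implicit.
Unset Printing Implicit Defensive.

Definition word (Sigma : Type) := nat -> Sigma.

Definition cat_word (Sigma : Type) (u : seq Sigma) (w : word Sigma) : word Sigma :=
  fun i => if i < size u then nth (w 0) u i else w (i - size u).

Definition residual (Sigma : Type) (L : word Sigma -> Prop) (u : seq Sigma) :
  word Sigma -> Prop := fun w => L (cat_word u w).

Definition lang_eq (Sigma : Type) (L1 L2 : word Sigma -> Prop) : Prop :=
  forall w, L1 w <-> L2 w.

Definition pb (P : Prop) : bool :=
  if excluded_middle_informative P then true else false.

(** Automaton (Q, Sigma, q_init, Delta, Gamma, col, W); Delta is given by its
    characteristic function, col is given on all triples (only its values on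
    transitions matter). *)
Record automaton (Sigma : finType) (Gamma : Type) := Automaton {
  St : finType;
  init : St;
  trans : St -> Sigma -> St -> bool;
  col : St -> Sigma -> St -> Gamma;
  acc : (nat -> Gamma) -> Prop
}.
Arguments St {Sigma Gamma} a.
Arguments init {Sigma Gamma} a.
Arguments trans {Sigma Gamma} a _ _ _.
Arguments col {Sigma Gamma} a _ _ _.
Arguments acc {Sigma Gamma} a _.

Section Automata.
Variables (Sigma : finType) (Gamma : Type) (A : automaton Sigma Gamma).

Definition transition := (St A * Sigma * St A)%type.

Definition run_from (q : St A) (w : word Sigma) (t : nat -> transition) : Prop :=
  (t 0).1.1 = q /\
  forall i, [/\ trans A (t i).1.1 (t i).1.2 (t i).2,
                (t i).1.2 = w i &
                (t i.+1).1.1 = (t i).2].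

Definition labels (t : nat -> transition) : nat -> Gamma :=
  fun i => col A (t i).1.1 (t i).1.2 (t i).2.

Definition lang_from (q : St A) (w : word Sigma) : Prop :=
  exists t, run_from q w t /\ acc A (labels t).

Definition lang : word Sigma -> Prop := lang_from (init A).

(** Resolver sigma : Sigma^+ -> Delta (its value on the empty word is irrelevant). *)
Definition is_resolver (sigma : seq Sigma -> transition) : Prop :=
  forall w : word Sigma,
    run_from (init A) w (fun i => sigma (mkseq w i.+1)) /\
    (lang w -> acc A (labels (fun i => sigma (mkseq w i.+1)))).

Definition history_deterministic : Prop := exists sigma, is_resolver sigma.

Definition equivalent (p q : St A) : Prop := lang_eq (lang_from p) (lang_from q).

End Automata.
Arguments run_from {Sigma Gamma} A q w t.
Arguments labels {Sigma Gamma} A t _.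
Arguments lang_from {Sigma Gamma} A q w.
Arguments lang {Sigma Gamma} A w.
Arguments is_resolver {Sigma Gamma} A sigma.
Arguments history_deterministic {Sigma Gamma} A.
Arguments equivalent {Sigma Gamma} A p q.

Definition gen_coBuchi (C : finType) (x : nat -> {set C}) : Prop :=
  exists c : C, exists N, forall i, N <= i -> c \notin x i.

Definition is_gen_coBuchi (Sigma C : finType) (A : automaton Sigma {set C}) : Prop :=
  forall x, acc A x <-> gen_coBuchi x.

(** CoBuchi automata: generalised coBuchi with C = {1}, modelled by [unit]. *)
Definition is_coBuchi (Sigma : finType) (A : automaton Sigma {set unit}) : Prop :=
  is_gen_coBuchi A.

Section CoBuchi.
Variables (Sigma : finType) (A : automaton Sigma {set unit}).

Definition safe_tr (p : St A) (a : Sigma) (q : St A) : bool :=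
  trans A p a q && (tt \notin col A p a q).

Definition safe_edge : rel (St A) := fun p q => [exists a, safe_tr p a q].

Definition same_safe_comp (p q : St A) : bool :=
  connect safe_edge p q && connect safe_edge q p.

Definition safe_lang (q : St A) (w : word Sigma) : Prop :=
  exists r : nat -> St A, r 0 = q /\ forall i, safe_tr (r i) (w i) (r i.+1).

Definition any_edge : rel (St A) := fun p q => [exists a, trans A p a q].

Definition all_reachable : Prop := forall q, connect any_edge (init A) q.

Definition semantically_deterministic : Prop :=
  forall q a p1 p2, trans A q a p1 -> trans A q a p2 -> equivalent A p1 p2.

Definition normal_form : Prop :=
  forall p a q, trans A p a q -> ~~ same_safe_comp p q -> tt \in col A p a q.

Definition safe_deterministic : Prop :=
  forall p a q1 q2, safe_tr p a q1 -> safe_tr p a q2 -> q1 = q2.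

Definition nice : Prop :=
  [/\ all_reachable, semantically_deterministic, normal_form & safe_deterministic].

Definition lang_incl (L1 L2 : word Sigma -> Prop) : Prop := forall w, L1 w -> L2 w.

Definition safe_centralised : Prop :=
  forall p q, equivalent A p q ->
    (lang_incl (safe_lang p) (safe_lang q) \/ lang_incl (safe_lang q) (safe_lang p)) ->
    same_safe_comp p q.

Definition safe_minimal : Prop :=
  forall p q, equivalent A p q -> lang_eq (safe_lang p) (safe_lang q) -> p = q.

Definition QR (R : word Sigma -> Prop) : {set St A} :=
  [set q | pb (lang_eq (lang_from A q) R)].

(** n_R = max over safe components S of |S ∩ Q^R|; each safe component is
    the component of some state p. *)
Definition n_of (R : word Sigma -> Prop) : nat :=
  \max_(p : St A) #|[set q in QR R | same_safe_comp p q]|.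

End CoBuchi.
Arguments safe_tr {Sigma} A p a q.
Arguments safe_edge {Sigma} A p q.
Arguments same_safe_comp {Sigma} A p q.
Arguments safe_lang {Sigma} A q w.
Arguments nice {Sigma} A.
Arguments safe_centralised {Sigma} A.
Arguments safe_minimal {Sigma} A.
Arguments QR {Sigma} A R.
Arguments n_of {Sigma} A R.

(* Main.v *)
Require Import Defs.
From mathcomp Require Import all_boot zify.
From Stdlib Require Import ClassicalDescription ClassicalEpsilon FunctionalExtensionality Classical.

Set Implicit Arguments.
Unset Strict Implicit.
Unset Printing Implicit Defensive.

Lemma pbP (P : Prop) : pb P = true <-> P.
Proof.
rewrite /pb; case: (ClassicalDescription.excluded_middle_informative P) => H; first by split.
by split => // /H.
Qed.

Section Words.
Variable Sigma : Type.
Implicit Types (u v : seq Sigma) (w : word Sigma).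

Lemma mkseqS (f : nat -> Sigma) n : mkseq f n.+1 = rcons (mkseq f n) (f n).
Proof. by rewrite /mkseq -addn1 iotaD map_cat /= cats1. Qed.

Lemma cat_word_lt u w i : i < size u -> cat_word u w i = nth (w 0) u i.
Proof. by rewrite /cat_word => ->. Qed.

Lemma cat_word_ge u w i : cat_word u w (size u + i) = w i.
Proof. by rewrite /cat_word ltnNge leq_addr /= addKn. Qed.

Lemma cat_word_nil w : cat_word [::] w = w.
Proof. by apply: functional_extensionality => i; rewrite /cat_word /= subn0. Qed.

Lemma cat_word_shift u w : (fun i => cat_word u w (i + size u)) = w.
Proof. by apply: functional_extensionality => i; rewrite addnC cat_word_ge. Qed.

Lemma cat_word_cons a u w i : cat_word (a :: u) w i.+1 = cat_word u w i.
Proof. by rewrite /cat_word /= ltnS subSS. Qed.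

Lemma mkseq_cat_le u w n : n <= size u -> mkseq (cat_word u w) n = take n u.
Proof.
elim: n => [|n IH] Hn; first by rewrite take0.
rewrite mkseqS IH ?(ltnW Hn) // cat_word_lt // (take_nth (w 0)) //.
Qed.

Lemma mkseq_cat_word u w n : mkseq (cat_word u w) (size u + n) = u ++ mkseq w n.
Proof.
elim: n => [|n IH]; first by rewrite addn0 mkseq_cat_le // take_size cats0.
by rewrite addnS mkseqS IH cat_word_ge mkseqS rcons_cat.
Qed.

Lemma mkseq_cat_size u w : mkseq (cat_word u w) (size u) = u.
Proof. by have := mkseq_cat_word u w 0; rewrite addn0 cats0. Qed.

Lemma cat_word_cat u v w : cat_word (u ++ v) w = cat_word u (cat_word v w).
Proof.
apply: functional_extensionality => i; rewrite /cat_word size_cat.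
case: (ltnP i (size u)) => Hu.
  by rewrite (ltn_addr _ Hu) nth_cat Hu; apply: set_nth_default.
rewrite nth_cat (ltnNge i (size u)) Hu /=.
case: (ltnP i (size u + size v)) => Huv.
  by have -> : i - size u < size v by rewrite ltn_subLR.
have -> : (i - size u < size v) = false by rewrite ltn_subLR // ltnNge Huv.
by rewrite subnDA.
Qed.

Lemma size_mkseq_w (f : nat -> Sigma) n : size (mkseq f n) = n.
Proof. by rewrite size_mkseq. Qed.

End Words.

Lemma residual_cat (Sigma : Type) (L : word Sigma -> Prop) u v :
  residual (residual L u) v = residual L (u ++ v).
Proof.
by apply: functional_extensionality => w; rewrite /residual cat_word_cat.
Qed.

Lemma lang_eq_refl (Sigma : Type) (L : word Sigma -> Prop) : lang_eq L L.
Proof. by []. Qed.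
Lemma lang_eq_sym (Sigma : Type) (L1 L2 : word Sigma -> Prop) :
  lang_eq L1 L2 -> lang_eq L2 L1.
Proof. by move=> H w; split => /H. Qed.
Lemma lang_eq_trans (Sigma : Type) (L1 L2 L3 : word Sigma -> Prop) :
  lang_eq L1 L2 -> lang_eq L2 L3 -> lang_eq L1 L3.
Proof. by move=> H1 H2 w; split => [/H1/H2|/H2/H1]. Qed.
Lemma residual_eq (Sigma : Type) (L1 L2 : word Sigma -> Prop) u :
  lang_eq L1 L2 -> lang_eq (residual L1 u) (residual L2 u).
Proof. by move=> H w; apply: H. Qed.

Section Aut.
Variables (Sigma : finType) (Gamma : Type) (X : automaton Sigma Gamma).

Inductive fpath : St X -> seq Sigma -> St X -> Prop :=
| fp_nil p : fpath p [::] p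
| fp_cons p a q y r : trans X p a q -> fpath q y r -> fpath p (a :: y) r.

Lemma fpath_cat p u q v r : fpath p u q -> fpath q v r -> fpath p (u ++ v) r.
Proof.
move=> H; elim: H v r => [//|p' a q' y r' Ht _ IH] v r H2.
exact: fp_cons Ht (IH _ _ H2).
Qed.

Lemma fpath_rcons p u q a r : fpath p u q -> trans X q a r -> fpath p (rcons u a) r.
Proof.
move=> H1 H2; rewrite -cats1; apply: (fpath_cat H1).
by apply: fp_cons H2 (fp_nil _).
Qed.

Lemma fpath1 p a q : fpath p [:: a] q -> trans X p a q.
Proof. by move=> H; inversion H; subst; inversion H5; subst. Qed.

Lemma run_prefix p w t : run_from X p w t -> forall k, fpath p (mkseq w k) (t k).1.1.
Proof.
case=> H0 Hi; elim=> [|k IH]; first by rewrite H0; apply: fp_nil.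
rewrite mkseqS; apply: (fpath_rcons IH).
by case: (Hi k) => Ht Hl Hn; rewrite -Hl Hn.
Qed.

Lemma run_suffix p w t k : run_from X p w t ->
  run_from X (t k).1.1 (fun i => w (i + k)) (fun i => t (i + k)).
Proof.
case=> H0 Hi; split; first by [].
by move=> i; case: (Hi (i + k)).
Qed.

Lemma run_compose p u q w t : fpath p u q -> run_from X q w t ->
  exists t', run_from X p (cat_word u w) t' /\
             forall i, labels X t' (i + size u) = labels X t i.
Proof.
move=> H; elim: H w t => [p' | p' a q' y r Htr _ IH] w t Hr.
  by exists t; rewrite cat_word_nil; split => // i; rewrite addn0.
have [t'' [Hr'' Hl'']] := IH w t Hr.
exists (fun i => if i is j.+1 then t'' j else (p', a, q')); split.
  case: Hr'' => H0 Hi; split => // [[|j]].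
    by split => //; rewrite H0.
  by case: (Hi j) => A1 A2 A3; split => //; rewrite cat_word_cons.
by move=> i; rewrite /= addnS -Hl''.
Qed.

Section Res.
Variable sigma : seq Sigma -> transition X.
Hypothesis Hs : is_resolver X sigma.

Definition stR (h : seq Sigma) : St X := if h is [::] then init X else (sigma h).2.

Lemma stR_rcons h a : stR (rcons h a) = (sigma (rcons h a)).2.
Proof. by case: h. Qed.

Lemma res_step h a :
  sigma (rcons h a) = (stR h, a, stR (rcons h a)) /\
  trans X (stR h) a (stR (rcons h a)).
Proof.
pose w := cat_word (rcons h a) (fun _ => a).
have [[H0 Hi] _] := Hs w.
have E1 : mkseq w (size h).+1 = rcons h a.
  by rewrite -(size_rcons h a) mkseq_cat_size.
have E2 : mkseq w (size h) = h.
  by rewrite mkseq_cat_le ?size_rcons // -cats1 take_size_cat.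
have E3 : w (size h) = a.
  by rewrite /w cat_word_lt ?size_rcons // nth_rcons ltnn eqxx.
have Esrc : (sigma (rcons h a)).1.1 = stR h.
  case: (lastP h) E1 E2 E3 => [|h' x] E1 E2 E3.
    by rewrite -E1 H0.
  rewrite size_rcons in E1 E2; case: (Hi (size h')) => _ _ Hn.
  by rewrite E1 E2 in Hn; rewrite Hn stR_rcons.
move: (Hi (size h)); rewrite E1 E3 => [[Ht Hl _]].
rewrite stR_rcons; move: Ht Hl Esrc.
case: (sigma (rcons h a)) => [[p b] q] /= Ht Hl Esrc.
rewrite Hl Esrc in Ht *; split; [reflexivity | exact Ht].
Qed.

Lemma res_fpath h : fpath (init X) h (stR h).
Proof.
elim/last_ind: h => [|h a IH]; first by apply: fp_nil.
by apply: (fpath_rcons IH); case: (res_step h a).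
Qed.

End Res.
End Aut.

Arguments fpath {Sigma Gamma} X _ _ _.
Arguments stR {Sigma Gamma X} sigma h.

Lemma gcb_shift (C : finType) (x : nat -> {set C}) k :
  gen_coBuchi (fun i => x (i + k)) <-> gen_coBuchi x.
Proof.
split=> [[c [N H]]|[c [N H]]]; exists c.
  exists (N + k) => i Hi.
  have Hk : k <= i by lia.
  have := H (i - k); rewrite subnK //; apply; lia.
by exists N => i Hi; apply: H; lia.
Qed.

Lemma gcb_ext (C : finType) (x y : nat -> {set C}) :
  (forall i, x i = y i) -> gen_coBuchi x -> gen_coBuchi y.
Proof. by move=> E [c [N H]]; exists c, N => i Hi; rewrite -E; apply: H. Qed.

Section GenCo.
Variables (Sigma C : finType) (X : automaton Sigma {set C}).
Hypothesis HX : is_gen_coBuchi X.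

Lemma lang_compose p u q w : fpath X p u q -> lang_from X q w ->
  lang_from X p (cat_word u w).
Proof.
move=> Hp [t [Hr Ha]]; have [t' [Hr' Hl]] := run_compose Hp Hr.
exists t'; split => //; apply/(HX (labels X t')).
apply/(gcb_shift _ (size u)).
apply: (gcb_ext _ (proj1 (HX _) Ha)) => i /=; by rewrite Hl.
Qed.

Lemma lang_suffix p u w : lang_from X p (cat_word u w) ->
  exists q, fpath X p u q /\ lang_from X q w.
Proof.
move=> [t [Hr Ha]]; exists (t (size u)).1.1; split.
  by have := run_prefix Hr (size u); rewrite mkseq_cat_size.
exists (fun i => t (i + size u)); split.
  by have := run_suffix (size u) Hr; rewrite cat_word_shift.
apply/(HX _); apply/(gcb_shift (labels X t) (size u)); exact: (proj1 (HX _) Ha).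
Qed.

Variable sigma : seq Sigma -> transition X.
Hypothesis Hs : is_resolver X sigma.

Lemma res_lang h : lang_eq (lang_from X (stR sigma h)) (residual (lang X) h).
Proof.
move=> w; split.
  by apply: lang_compose; apply: res_fpath.
move=> Hw; have [Hrr Ha] := Hs (cat_word h w).
set t := (fun i => sigma (mkseq (cat_word h w) i.+1)) in Hrr Ha.
exists (fun i => t (i + size h)); split.
  have -> : stR sigma h = (t (size h)).1.1.
    rewrite /t mkseqS mkseq_cat_size.
    by case: (res_step Hs h (cat_word h w (size h))) => -> _.
  by have := run_suffix (size h) Hrr; rewrite cat_word_shift.
apply/(HX _); apply/(gcb_shift (labels X t) (size h)); exact: (proj1 (HX _) (Ha Hw)).
Qed.

End GenCo.

Section CoB.
Variables (Sigma : finType) (A : automaton Sigma {set unit}).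
Hypothesis HA : is_coBuchi A.
Hypothesis Hsd : semantically_deterministic A.
Hypothesis Hsdet : safe_deterministic A.

Lemma equiv_refl p : equivalent A p p.
Proof. by []. Qed.
Lemma equiv_sym p q : equivalent A p q -> equivalent A q p.
Proof. exact: lang_eq_sym. Qed.
Lemma equiv_trans p q r : equivalent A p q -> equivalent A q r -> equivalent A p r.
Proof. exact: lang_eq_trans. Qed.

Lemma equiv_step_aux x1 x2 a y1 y2 : equivalent A x1 x2 -> trans A x1 a y1 ->
  trans A x2 a y2 -> forall w, lang_from A y1 w -> lang_from A y2 w.
Proof.
move=> E T1 T2 w Lw.
have := lang_compose HA (fp_cons T1 (fp_nil y1)) Lw => /E.
case/(lang_suffix HA) => q [/fpath1 Tq Lq].
by apply/(Hsd Tq T2).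
Qed.

Lemma equiv_step x1 x2 a y1 y2 : equivalent A x1 x2 -> trans A x1 a y1 ->
  trans A x2 a y2 -> equivalent A y1 y2.
Proof.
move=> E T1 T2 w; split; first exact: equiv_step_aux E T1 T2 w.
exact: equiv_step_aux (equiv_sym E) T2 T1 w.
Qed.

Lemma equiv_path x1 u y1 x2 y2 : equivalent A x1 x2 -> fpath A x1 u y1 ->
  fpath A x2 u y2 -> equivalent A y1 y2.
Proof.
move=> E H; elim: H x2 E => [p|p a q y r T _ IH] x2 E H2.
  by inversion H2; subst.
inversion H2 as [|p0 a0 q0 y0 r0 T0 P0]; subst.
exact: IH (equiv_step E T T0) P0.
Qed.

Lemma semdet_lang p u p' : fpath A p u p' ->
  lang_eq (lang_from A p') (residual (lang_from A p) u).
Proof.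
move=> H w; split; first exact: lang_compose.
case/(lang_suffix HA) => q [Hq Lq].
by apply/(equiv_path (equiv_refl p) H Hq).
Qed.

Definition dA p a : option (St A) := [pick q | safe_tr A p a q].

Lemma dA_safe p a q : dA p a = Some q <-> safe_tr A p a q.
Proof.
rewrite /dA; case: pickP => [q' Hq'|H]; split => //.
- by case=> <-.
- by move=> Hq; rewrite (Hsdet Hq' Hq).
- by move=> Hq; rewrite H in Hq.
Qed.

Fixpoint dstar p (u : seq Sigma) : option (St A) :=
  if u is a :: u' then (if dA p a is Some q then dstar q u' else None) else Some p.

Lemma dstar_cat p u v : dstar p (u ++ v) = obind (fun q => dstar q v) (dstar p u).
Proof. by elim: u p => [//|a u IH] p /=; case: (dA p a). Qed.

Lemma dstar_rcons p u a : dstar p (rcons u a) = obind (fun q => dA q a) (dstar p u).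
Proof.
rewrite -cats1 dstar_cat; case: (dstar p u) => //= q.
by case: (dA q a).
Qed.

Lemma dstar_prefix p u v : dstar p (u ++ v) != None -> dstar p u != None.
Proof. by rewrite dstar_cat; case: (dstar p u). Qed.

Lemma dstar_fpath p u q : dstar p u = Some q -> fpath A p u q.
Proof.
elim: u p => [|a u IH] p /=; first by case=> ->; apply: fp_nil.
case E: (dA p a) => [p1|//] /IH; apply: fp_cons.
by move/dA_safe: E => /andP[].
Qed.

Definition Sf p (z : word Sigma) := forall n, dstar p (mkseq z n) != None.

Lemma Sf_safe p z : safe_lang A p z <-> Sf p z.
Proof.
split.
  case=> r [H0 Hr].
  suff E : forall n, dstar p (mkseq z n) = Some (r n) by move=> n; rewrite E.
  elim=> [|n IH]; first by rewrite H0.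
  by rewrite mkseqS dstar_rcons IH /=; apply/dA_safe.
move=> H; exists (fun n => odflt p (dstar p (mkseq z n))); split => // n.
move: (H n.+1); rewrite mkseqS dstar_rcons.
case: (dstar p (mkseq z n)) => [x|//] /=.
by case E: (dA x (z n)) => [y|//] _; apply/dA_safe.
Qed.

Lemma Sf_cat p u q z : dstar p u = Some q -> (Sf p (cat_word u z) <-> Sf q z).
Proof.
move=> Hpu; split=> H n.
  by move: (H (size u + n)); rewrite mkseq_cat_word dstar_cat Hpu.
case: (leqP n (size u)) => Hn.
  rewrite mkseq_cat_le //; apply: (@dstar_prefix _ _ (drop n u)).
  by rewrite cat_take_drop Hpu.
by rewrite -(subnKC (ltnW Hn)) mkseq_cat_word dstar_cat Hpu /=.
Qed.

End CoB.
Arguments dA {Sigma} A p a.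
Arguments dstar {Sigma} A p u.
Arguments Sf {Sigma} A p z.

Section Chain.
Variables (X : Type) (Step : X -> X -> Prop) (Good : X -> X -> Prop) (Inv : X -> Prop).

Fixpoint RGn (n : nat) (x : X) : Prop :=
  (exists y, Step x y /\ Good x y) \/
  (if n is m.+1 then exists y, Step x y /\ RGn m y else False).

Lemma RGn_step n x y : Step x y -> RGn n y -> RGn n.+1 x.
Proof. by move=> H1 H2; right; exists y. Qed.

Hypothesis HInv : forall x y, Inv x -> Step x y -> Inv y.
Hypothesis HRG : forall x, Inv x -> exists n, RGn n x.

Lemma inf_chain x0 : Inv x0 ->
  exists f : nat -> X, f 0 = x0 /\ (forall k, Step (f k) (f k.+1)) /\
    (forall N, exists k, N <= k /\ Good (f k) (f k.+1)).
Proof.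
move=> I0.
pose T (p q : X * nat) := Step p.1 q.1 /\ Inv q.1 /\ RGn q.2 q.1 /\
   (Good p.1 q.1 \/ q.2 < p.2).
have HT : forall p, Inv p.1 /\ RGn p.2 p.1 -> exists q, T p q.
  move=> [x n] /= [Ix]; case: n => [|m] /= [[y [Sy Gy]]|].
  - have Iy := HInv Ix Sy; have [m Hm] := HRG Iy.
    by exists (y, m); rewrite /T /=; split => //; split => //; split => //; left.
  - by [].
  - have Iy := HInv Ix Sy; have [m' Hm] := HRG Iy.
    by exists (y, m'); rewrite /T /=; split => //; split => //; split => //; left.
  - case=> y [Sy Ry]; exists (y, m); rewrite /T /=; split => //; split; first exact: HInv Ix Sy.
    by split => //; right.
have HT' : forall p, exists q, Inv p.1 /\ RGn p.2 p.1 -> T p q.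
  move=> p; case: (classic (Inv p.1 /\ RGn p.2 p.1)) => H.
    by have [q Hq] := HT p H; exists q.
  by exists p.
pose g p := proj1_sig (constructive_indefinite_description _ (HT' p)).
have Hg : forall p, Inv p.1 /\ RGn p.2 p.1 -> T p (g p).
  by move=> p; rewrite /g; case: constructive_indefinite_description.
have [n0 Hn0] := HRG I0.
pose F := fix F k := if k is k'.+1 then g (F k') else (x0, n0).
have HF : forall k, Inv (F k).1 /\ RGn (F k).2 (F k).1.
  elim=> [|k [IH1 IH2]] //=.
  by have [_ [? [? _]]] := Hg _ (conj IH1 IH2).
have HF' : forall k, T (F k) (F k.+1) by move=> k; apply: Hg.
exists (fun k => (F k).1); split => //; split.
  by move=> k; case: (HF' k).
move=> N; apply: NNPP => Hn.
have Hdec : forall k, N <= k -> (F k.+1).2 < (F k).2.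
  move=> k Hk; case: (HF' k) => _ [_ [_ [G|//]]].
  by case: Hn; exists k.
have : forall j, (F (N + j)).2 + j <= (F N).2.
  elim=> [|j IH]; first by rewrite addn0 addn0.
  have := Hdec (N + j) (leq_addr _ _); rewrite [N + j.+1]addnS; lia.
by move/(_ ((F N).2).+1); lia.
Qed.

End Chain.

Section Main.
Variables (Sigma C : finType) (L : word Sigma -> Prop)
  (B : automaton Sigma {set C}) (A : automaton Sigma {set unit}).
Hypothesis HB : is_gen_coBuchi B.
Hypothesis HLB : lang_eq (lang B) L.
Hypothesis HA : is_coBuchi A.
Hypothesis HLA : lang_eq (lang A) L.
Hypothesis Hnice : nice A.
Hypothesis Hmin : safe_minimal A.
Hypothesis Hcen : safe_centralised A.
Variables (sB : seq Sigma -> transition B) (sA : seq Sigma -> transition A).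
Hypothesis HsB : is_resolver B sB.
Hypothesis HsA : is_resolver A sA.

Lemma Hsd : semantically_deterministic A. Proof. by case: Hnice. Qed.
Lemma Hnf : normal_form A. Proof. by case: Hnice. Qed.
Lemma Hsdet : safe_deterministic A. Proof. by case: Hnice. Qed.
Lemma Hreach : all_reachable A. Proof. by case: Hnice. Qed.

Local Notation stB := (stR sB).
Local Notation stA := (stR sA).
Definition labB h := col B (sB h).1.1 (sB h).1.2 (sB h).2.
Definition labA h := col A (sA h).1.1 (sA h).1.2 (sA h).2.

Lemma labB_rcons h a : labB (rcons h a) = col B (stB h) a (stB (rcons h a)).
Proof. by rewrite /labB; case: (res_step HsB h a) => ->. Qed.
Lemma labA_rcons h a : labA (rcons h a) = col A (stA h) a (stA (rcons h a)).
Proof. by rewrite /labA; case: (res_step HsA h a) => ->. Qed.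

Lemma stB_lang h : lang_eq (lang_from B (stB h)) (residual L h).
Proof. exact: lang_eq_trans (res_lang HB HsB h) (residual_eq h HLB). Qed.

Lemma fpA_lang u p : fpath A (init A) u p -> lang_eq (lang_from A p) (residual L u).
Proof. by move=> H; apply: lang_eq_trans (semdet_lang HA Hsd H) (residual_eq u HLA). Qed.

Lemma stA_lang h : lang_eq (lang_from A (stA h)) (residual L h).
Proof. exact: fpA_lang (res_fpath HsA h). Qed.

Definition le (r t : St A) := equivalent A r t /\ (forall z, Sf A r z -> Sf A t z).

Lemma le_refl r : le r r. Proof. by split. Qed.
Lemma le_trans r s t : le r s -> le s t -> le r t.
Proof.
by case=> E1 I1 [E2 I2]; split; [exact: equiv_trans E1 E2|move=> z /I1/I2].
Qed.
Lemma le_antisym r t : le r t -> le t r -> r = t.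
Proof.
case=> E1 I1 [_ I2]; apply: Hmin => // z.
rewrite !(Sf_safe Hsdet); split; [exact: I1|exact: I2].
Qed.

Lemma safe_same x a y : safe_tr A x a y -> same_safe_comp A x y.
Proof.
case/andP=> T N; apply/negPn/negP => H.
by rewrite (Hnf T H) in N.
Qed.

Lemma same_trans x y z : same_safe_comp A x y -> same_safe_comp A y z ->
  same_safe_comp A x z.
Proof.
case/andP=> H1 H2 /andP[H3 H4]; apply/andP; split.
  exact: connect_trans H1 H3.
exact: connect_trans H4 H2.
Qed.

Lemma same_sym x y : same_safe_comp A x y -> same_safe_comp A y x.
Proof. by case/andP=> H1 H2; apply/andP. Qed.

Lemma dstar_same x u y : dstar A x u = Some y -> same_safe_comp A x y.
Proof.
elim: u x => [|a u IH] x /=.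
  by move=> [<-]; rewrite /same_safe_comp connect0.
case E: (dA A x a) => [x1|//] /IH H1; apply: same_trans H1.
exact: safe_same (proj1 (dA_safe Hsdet _ _ _) E).
Qed.

Lemma connect_dstar (x y : St A) : connect (safe_edge A) x y -> exists u, dstar A x u = Some y.
Proof.
case/connectP=> p Hp ->; elim: p x Hp => [|q p IH] x /=; first by exists [::].
case/andP=> /existsP[a Ha] /IH[u Hu]; exists (a :: u) => /=.
by move/(dA_safe Hsdet): Ha => ->.
Qed.

Lemma connect_fpath (x y : St A) : connect (@any_edge _ A) x y -> exists u, fpath A x u y.
Proof.
case/connectP=> p Hp ->; elim: p x Hp => [|q p IH] x /=.
  by exists [::]; apply: fp_nil.
case/andP=> /existsP[a Ha] /IH[u Hu]; exists (a :: u).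
exact: fp_cons Ha Hu.
Qed.

Lemma lang_of_safe u p z : fpath A (init A) u p -> Sf A p z -> lang A (cat_word u z).
Proof.
move=> Hu /(Sf_safe Hsdet) [r [H0 Hr]]; apply: (lang_compose HA Hu).
exists (fun i => (r i, z i, r i.+1)); split.
  by split => // i; case/andP: (Hr i).
apply/(HA _); exists tt, 0 => i _; rewrite /labels /=.
by case/andP: (Hr i).
Qed.

Section Comp.
Variable p0 : St A.
Local Notation S := (same_safe_comp A p0).
Variables q1 q2 : St A.
Hypothesis Hq12 : q1 != q2.
Hypothesis Sq1 : S q1.
Hypothesis Sq2 : S q2.

Lemma S_stay x u y : S x -> dstar A x u = Some y -> S y.
Proof. by move=> Sx /dstar_same; apply: same_trans. Qed.

Lemma S_conn x y : S x -> S y -> exists u, dstar A x u = Some y.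
Proof.
move=> /andP[_ Hx] /andP[Hy _]; apply: connect_dstar.
exact: connect_trans Hx Hy.
Qed.

Lemma S_succ x : S x -> exists a y, safe_tr A x a y /\ S y.
Proof.
move=> Sx.
have [qi [Sqi Hqi]] : exists qi, S qi /\ qi != x.
  case: (eqVneq x q1) => [Ex|H]; last by exists q1; split => //; rewrite eq_sym.
  by exists q2; split => //; rewrite Ex eq_sym.
have /connectP [p Hp Hl] : connect (safe_edge A) x qi.
  by case/andP: Sx => _ H1; case/andP: Sqi => H2 _; apply: connect_trans H1 H2.
case: p Hp Hl => [|y p] /=; first by move=> _ E; rewrite E eqxx in Hqi.
case/andP=> /existsP[a Ha] Hp Hl; exists a, y; split => //.
apply: (same_trans (Sx)); apply/andP; split.
  by apply: connect1; apply/existsP; exists a.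
apply: (connect_trans (y := qi)); first by apply/connectP; exists p.
by case/andP: Sqi => _ H; case/andP: Sx => H' _; apply: connect_trans H H'.
Qed.

Lemma S_live x : S x -> exists z, Sf A x z.
Proof.
move=> Sx; have [a0 [y0 _]] := S_succ Sx.
have H : forall x, exists ay : Sigma * St A, S x -> safe_tr A x ay.1 ay.2 /\ S ay.2.
  move=> x'; case: (classic (S x')) => Hx'.
    by have [a [y Hy]] := S_succ Hx'; exists (a, y).
  by exists (a0, x').
pose g x := proj1_sig (constructive_indefinite_description _ (H x)).
have Hg : forall x, S x -> safe_tr A x (g x).1 (g x).2 /\ S (g x).2.
  by move=> x'; rewrite /g; case: constructive_indefinite_description.
pose r := fix r n := if n is m.+1 then (g (r m)).2 else x.
have Sr : forall n, S (r n) by elim=> [|n IH] //=; case: (Hg _ IH).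
exists (fun n => (g (r n)).1); apply/(Sf_safe Hsdet).
by exists r; split => // n; case: (Hg _ (Sr n)).
Qed.

Lemma propagate x x' u y : le x x' -> dstar A x u = Some y -> S y ->
  exists y', dstar A x' u = Some y' /\ le y y'.
Proof.
move=> [E I] Hu Sy; have [z Hz] := S_live Sy.
have Hz' := I _ (proj2 (Sf_cat z Hu) Hz).
have := Hz' (size u); rewrite mkseq_cat_size.
case Hu': (dstar A x' u) => [y'|//] _; exists y'; split => //; split.
  apply: lang_eq_trans (semdet_lang HA Hsd (dstar_fpath Hsdet Hu)) _.
  apply: lang_eq_trans (residual_eq u E) _.
  exact: lang_eq_sym (semdet_lang HA Hsd (dstar_fpath Hsdet Hu')).
move=> z' Hz1; apply/(Sf_cat z' Hu'); apply: I; exact/(Sf_cat z' Hu).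
Qed.

Lemma sync n x x' u0 : #|[set v | pb (le x v)]| <= n -> S x -> le x x' ->
  dstar A x u0 = Some x' -> exists u s, dstar A x u = Some s /\ dstar A x' u = Some s.
Proof.
elim: n x x' u0 => [|n IH] x x' u0 Hn Sx Hle Hu0.
  have Hx : x \in [set v | pb (le x v)] by rewrite inE; apply/pbP/le_refl.
  by move: Hn; rewrite leqn0 => /eqP /cards0_eq H0; rewrite H0 inE in Hx.
case: (eqVneq x x') => [<-|Hne]; first by exists [::], x.
have Sx' := S_stay Sx Hu0.
have [x'' [Hu1 Hle']] := propagate Hle Hu0 Sx'.
have Hlt : #|[set v | pb (le x' v)]| < #|[set v | pb (le x v)]|.
  apply: proper_card; apply/properP; split.
    apply/subsetP => v; rewrite !inE => /pbP H; apply/pbP; exact: le_trans Hle H.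
  exists x; first by rewrite inE; apply/pbP/le_refl.
  rewrite inE; apply/negP => /pbP H.
  by move: Hne; rewrite (le_antisym Hle H) eqxx.
have [u [s [H1 H2]]] := IH x' x'' u0 (leq_trans Hlt Hn) Sx' Hle' Hu1.
exists (u0 ++ u), s; by rewrite !dstar_cat Hu0 Hu1.
Qed.


Section Phase2.
Variables (v : seq Sigma) (qs : St A) (c : C).
Hypothesis Hv : fpath A (init A) v qs.
Hypothesis Sqs : S qs.
Hypothesis Hstuck : forall e a, dstar A qs (rcons e a) != None ->
  c \notin labB (v ++ rcons e a).

Definition P r b := exists y, dstar A qs y = Some r /\ stB (v ++ y) = b.

Lemma P_lang r b : P r b -> lang_eq (lang_from B b) (lang_from A r).
Proof.
case=> y [Hy <-]; apply: lang_eq_trans (stB_lang _) _.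
apply: lang_eq_sym; apply: fpA_lang.
exact: fpath_cat Hv (dstar_fpath Hsdet Hy).
Qed.

Lemma P_S r b : P r b -> S r.
Proof. by case=> y [Hy _]; apply: S_stay Sqs Hy. Qed.

Lemma P_step r0 b a r' : P r0 b -> dA A r0 a = Some r' ->
  exists b', [/\ trans B b a b', c \notin col B b a b' & P r' b'].
Proof.
case=> y [Hy <-] Ha; exists (stB (rcons (v ++ y) a)); split.
- by case: (res_step HsB (v ++ y) a).
- have Hy' : dstar A qs (rcons y a) = Some r' by rewrite dstar_rcons Hy.
  by have := @Hstuck y a; rewrite Hy' -rcons_cat labB_rcons; apply.
- by exists (rcons y a); rewrite dstar_rcons Hy /= Ha rcons_cat.
Qed.

Definition X2 := (seq Sigma * St A * St B)%type.
Definition Inv2 (x : X2) := P x.1.2 x.2 /\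
  lang_eq (lang_from A x.1.2) (residual L (v ++ x.1.1)).
Definition Step2 (x x' : X2) := exists a r0, [/\ x'.1.1 = rcons x.1.1 a, P r0 x.2,
  dA A r0 a = Some x'.1.2 &
  [/\ trans B x.2 a x'.2, c \notin col B x.2 a x'.2 & P x'.1.2 x'.2]].
Definition Good2 (x x' : X2) := tt \in labA (v ++ x'.1.1).

Lemma Inv2_step x x' : Inv2 x -> Step2 x x' -> Inv2 x'.
Proof.
case: x x' => [[s r] b] [[s' r'] b'] [HP HL] [a [r0 [/= -> HP0 Ha [_ _ HP']]]].
split => //=.
have Ht : trans A r0 a r' by move/(dA_safe Hsdet): Ha => /andP[].
apply: lang_eq_trans (semdet_lang HA Hsd (fp_cons Ht (fp_nil r'))) _.
rewrite -cats1 catA -residual_cat; apply: residual_eq.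
apply: lang_eq_trans (lang_eq_sym (P_lang HP0)) _.
exact: lang_eq_trans (P_lang HP) HL.
Qed.

Lemma phase2_contra : (forall x, Inv2 x -> exists n, RGn Step2 Good2 n x) -> False.
Proof.
move=> HRG.
have I0 : Inv2 ([::], qs, stB v).
  split; first by exists [::]; rewrite cats0.
  by rewrite /= cats0; apply: fpA_lang.
have [f [F0 [FS FG]]] := inf_chain Inv2_step HRG I0.
have [a0 _] : exists a0 : Sigma, True.
  by case: (FS 0) => a _; exists a.
pose z k := nth a0 (f k.+1).1.1 k.
have Hf : forall k, (f k).1.1 = mkseq z k /\
   [/\ trans B (f k).2 (z k) (f k.+1).2 & c \notin col B (f k).2 (z k) (f k.+1).2].
  elim=> [|k [IH _]].
    split; first by rewrite F0.
    case: (FS 0) => a [r0 [E _ _ [T N _]]].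
    have -> : z 0 = a by rewrite /z E F0.
    by split.
  case: (FS k) => a [r0 [E _ _ _]].
  have Ez : z k = a by rewrite /z E IH nth_rcons size_mkseq ltnn eqxx.
  split; first by rewrite E IH mkseqS Ez.
  case: (FS k.+1) => a' [r0' [E' _ _ [T N _]]].
  have -> : z k.+1 = a'.
    by rewrite /z E' E IH nth_rcons size_rcons size_mkseq ltnn eqxx.
  by split.
pose w := cat_word v z.
pose tB i := if i < size v then sB (mkseq w i.+1)
             else ((f (i - size v)).2, z (i - size v), (f (i - size v).+1).2).
have Hrun : run_from B (init B) w tB.
  split.
    rewrite /tB; case: ifP => H0.
      by rewrite mkseqS /=; case: (res_step HsB [::] (w 0)) => -> _.
    rewrite sub0n F0 /=.
    by move: H0; case: v => //.
  move=> i; rewrite /tB; case: (ltnP i (size v)) => Hi.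
    rewrite mkseqS; case: (res_step HsB (mkseq w i) (w i)) => -> T.
    split => //=.
    case: ifP => Hi1.
      rewrite [mkseq w i.+2]mkseqS; case: (res_step HsB (mkseq w i.+1) (w i.+1)) => -> _.
      by rewrite mkseqS.
    have Ei : i.+1 = size v by apply/eqP; rewrite eqn_leq Hi leqNgt Hi1.
    rewrite Ei subnn F0 /= -mkseqS Ei.
    by rewrite /w mkseq_cat_size.
  have -> : i.+1 < size v = false by rewrite ltnNge (leq_trans Hi).
  have Ew : w i = z (i - size v) by rewrite /w -{1}(subnKC Hi) cat_word_ge.
  rewrite subSn //; case: (Hf (i - size v)) => _ [T N]; split => //.
have HwB : lang B w.
  exists tB; split => //; apply/(HB _); exists c, (size v) => i Hi.
  rewrite /labels /tB ltnNge Hi /=.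
  by case: (Hf (i - size v)) => _ [_ N].
have [_ HacA] := HsA w.
have /(HA _) [[] [N HN]] := HacA (proj2 (HLA w) (proj1 (HLB w) HwB)).
have [k [Hk G]] := FG N.
move: (HN (size v + k) (leq_trans Hk (leq_addl _ _))).
rewrite /labels /= -/(labA _) -addnS /w mkseq_cat_word.
case: (Hf k.+1) => <- _ /negP; apply.
exact: G.
Qed.

Definition Dead (x : X2) := Inv2 x /\ forall n, ~ RGn Step2 Good2 n x.

Lemma exists_dead : exists x, Dead x.
Proof.
apply: NNPP => H; apply: phase2_contra => x Ix.
apply: NNPP => H2; apply: H; exists x; split => // n Hn.
by apply: H2; exists n.
Qed.

Lemma Dead_step x y : Dead x -> Step2 x y -> Dead y /\ tt \notin labA (v ++ y.1.1).
Proof.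
move=> [Ix Dx] Sxy; split; first split.
- exact: Inv2_step Ix Sxy.
- by move=> n Hn; apply: (Dx n.+1); apply: RGn_step Sxy Hn.
apply/negP => G; apply: (Dx 0); left; by exists y.
Qed.

Lemma Dead_switch s r b r0 : Dead (s, r, b) -> P r0 b -> Dead (s, r0, b).
Proof.
move=> [[HP HL] Dx] HP0; split; first split => //=.
  apply: lang_eq_trans (lang_eq_sym (P_lang HP0)) _.
  exact: lang_eq_trans (P_lang HP) HL.
by move=> n Hn; apply: (Dx n); case: n Hn.
Qed.

Lemma C0 u : forall s r b r0 r', Dead (s, r, b) -> P r0 b -> dstar A r0 u = Some r' ->
  exists b', Dead (s ++ u, r', b') /\
    dstar A (stA (v ++ s)) u = Some (stA (v ++ s ++ u)).
Proof.
elim: u => [|a u IH] s r b r0 r' D HP0 /=.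
  by case=> <-; exists b; rewrite cats0; split => //; apply: Dead_switch D HP0.
case E: (dA A r0 a) => [r1|//] Hu.
have [b1 [T N HP1]] := P_step HP0 E.
have Sxy : Step2 (s, r, b) (rcons s a, r1, b1) by exists a, r0; split => //; split.
have [D1 Nl] := Dead_step D Sxy.
have [b' [D' Hd]] := IH _ _ _ _ _ D1 HP1 Hu.
exists b'; rewrite cat_rcons in D'; split => //.
move: Nl Hd; rewrite /= -rcons_cat labA_rcons => Nl.
have Ht : trans A (stA (v ++ s)) a (stA (rcons (v ++ s) a)).
  by case: (res_step HsA (v ++ s) a).
have -> : dA A (stA (v ++ s)) a = Some (stA (rcons (v ++ s) a)).
  by apply/(dA_safe Hsdet); rewrite /safe_tr Ht.
by rewrite rcons_cat cat_rcons.
Qed.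

Lemma C1 s r b r' : Dead (s, r, b) -> P r' b -> le r' (stA (v ++ s)).
Proof.
move=> D HP'; have [[HP HL] _] := D; split.
  apply: lang_eq_trans (lang_eq_sym (P_lang HP')) _.
  apply: lang_eq_trans (P_lang HP) _.
  exact: lang_eq_trans HL (lang_eq_sym (stA_lang _)).
move=> z Hz n; case E: (dstar A r' (mkseq z n)) (Hz n) => [r''|//] _.
by have [b' [_ ->]] := C0 D HP' E.
Qed.

Definition Diag q b := exists s, Dead (s, q, b) /\ stA (v ++ s) = q.

Lemma C3 : exists s r b, Dead (s, r, b) /\ stA (v ++ s) = r.
Proof.
have [[[s r] b] D] := exists_dead.
have [[HP _] _] := D.
have Sr := P_S HP.
have Hle := C1 D HP.
have St : S (stA (v ++ s)).
  apply: same_trans Sr _; apply: Hcen; first by case: Hle.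
  left => z; rewrite !(Sf_safe Hsdet); exact: Hle.2.
have [u0 Hu0] := S_conn Sr St.
have [u [s0 [H1 H2]]] := sync (leqnn _) Sr Hle Hu0.
have [b' [D' Hd]] := C0 D HP H1.
exists (s ++ u), s0, b'; split => //.
by move: Hd; rewrite H2 catA => -[].
Qed.

Lemma C4 q : S q -> exists b, Diag q b.
Proof.
move=> Sq; have [s1 [r1 [b1 [D1 E1]]]] := C3.
have [[HP1 _] _] := D1.
have [u Hu] := S_conn (P_S HP1) Sq.
have [b' [D' Hd]] := C0 D1 HP1 Hu.
exists b', (s1 ++ u); split => //.
by move: Hd; rewrite E1 Hu catA => -[].
Qed.

Lemma C5 q q' b : Diag q b -> Diag q' b -> q = q'.
Proof.
case=> s [D E] [s' [D' E']].
have [[HP _] _] := D; have [[HP' _] _] := D'.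
apply: le_antisym.
  by have := C1 D' HP; rewrite E'.
by have := C1 D HP'; rewrite E.
Qed.

Lemma Diag_lang q b : Diag q b -> lang_eq (lang_from B b) (lang_from A q).
Proof. by case=> s [[[HP _] _] _]; apply: P_lang. Qed.

End Phase2.

Section Phase1.
Variable v0 : seq Sigma.
Hypothesis Hv0 : fpath A (init A) v0 q1.
Variable c0 : C.

Definition sched k := nth c0 (enum C) (k %% #|C|).

Lemma sched_inf c K : exists k, K <= k /\ sched k = c.
Proof.
have Hc : c \in enum C by rewrite mem_enum.
have Hpos : 0 < #|C| by apply/card_gt0P; exists c.
have Hi : index c (enum C) < #|C| by rewrite cardE index_mem.
exists (index c (enum C) + K * #|C|); split.
  by rewrite (leq_trans (leq_pmulr _ Hpos)) // leq_addl.
by rewrite /sched addnC modnMDl modn_small // nth_index.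
Qed.

Definition X1 := (seq Sigma * nat)%type.
Definition Inv1 (x : X1) := dstar A q1 x.1 != None.
Definition Step1 (x x' : X1) := exists a, [/\ x'.1 = rcons x.1 a, dstar A q1 x'.1 != None &
  (x'.2 = x.2 \/ (x'.2 = x.2.+1 /\ sched x.2 \in labB (v0 ++ x'.1)))].
Definition Good1 (x x' : X1) := x'.2 = x.2.+1.

Lemma Inv1_step x y : Inv1 x -> Step1 x y -> Inv1 y.
Proof. by move=> _ [a [_ H _]]. Qed.

Lemma phase1_contra : (forall x, Inv1 x -> exists n, RGn Step1 Good1 n x) -> False.
Proof.
move=> HRG.
have I0 : Inv1 ([::], 0) by [].
have [f [F0 [FS FG]]] := inf_chain Inv1_step HRG I0.
have [a0 _] : exists a0 : Sigma, True.
  by case: (FS 0) => a _; exists a.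
pose z k := nth a0 (f k.+1).1 k.
have Hf : forall k, (f k).1 = mkseq z k.
  elim=> [|k IH]; first by rewrite F0.
  case: (FS k) => a [E _ _].
  have Ez : z k = a by rewrite /z E IH nth_rcons size_mkseq ltnn eqxx.
  by rewrite E IH mkseqS Ez.
have Hz : Sf A q1 z.
  case=> [|n]; first by [].
  by case: (FS n) => a [_ H _]; rewrite -Hf.
have HwB : lang B (cat_word v0 z).
  by apply/HLB/HLA; apply: lang_of_safe Hv0 Hz.
have [_ HacB] := HsB (cat_word v0 z).
have /(HB _) [c [N HN]] := HacB HwB.
pose ks k := (f k).2.
have Hks : forall k, ks k.+1 = ks k \/
    (ks k.+1 = (ks k).+1 /\ sched (ks k) \in labB (v0 ++ (f k.+1).1)).
  by move=> k; case: (FS k) => a [_ _ H].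
have Hkle : forall k, ks k <= k.
  elim=> [|k IH]; first by rewrite /ks F0.
  by case: (Hks k) => [->|[-> _]]; lia.
have inner : forall i, exists j, ks j = ks i /\ ks j.+1 = (ks i).+1.
  move=> i.
  have Hex : exists j, (i <= j) && (ks j.+1 == (ks j).+1).
    have [k [Hk G]] := FG i; exists k; rewrite Hk /=; apply/eqP; exact: G.
  case: (ex_minnP Hex) => j /andP[Hij /eqP Hj] Hmn.
  have Hconst : forall d, i + d <= j -> ks (i + d) = ks i.
    elim=> [|d IH] Hd; first by rewrite addn0.
    rewrite addnS; have Hd' : i + d < j by rewrite -addnS.
    case: (Hks (i + d)) => [->|[E _]]; first by apply: IH; apply: ltnW.
    have := Hmn (i + d); rewrite leq_addr E eqxx /= => /(_ isT).
    by rewrite leqNgt Hd'.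
  have Ej : ks j = ks i by rewrite -(subnKC Hij); apply: Hconst; rewrite subnKC.
  by exists j; rewrite -Ej.
have allK : forall K, exists i, ks i = K.
  elim=> [|K [i Hi]]; first by exists 0; rewrite /ks F0.
  by have [j [_ Hj]] := inner i; exists j.+1; rewrite Hj Hi.
have [K [HK HsK]] := sched_inf c N.
have [i Hi] := allK K.
have [j [Hj1 Hj2]] := inner i.
case: (Hks j) => [E|[_ Hl]]; first by move: E; rewrite Hj1 Hj2 Hi; lia.
move: Hl; rewrite Hj1 Hi HsK Hf -mkseq_cat_word addnS.
have : N <= size v0 + j.
  by apply: leq_trans HK _; rewrite -Hi -Hj1 (leq_trans (Hkle j)) // leq_addl.
by move/HN => /negP.
Qed.

Lemma phase1 : exists y k, dstar A q1 y != None /\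
  forall e a, dstar A q1 (y ++ rcons e a) != None ->
    sched k \notin labB (v0 ++ y ++ rcons e a).
Proof.
apply: NNPP => H; apply: phase1_contra => [[y k]] Iy.
apply: NNPP => H2; apply: H; exists y, k; split => // e a He.
apply/negP => Hl; apply: H2; exists (size e).
elim: e y He Hl {Iy} => [|x e IH] y He Hl /=.
  left; exists (rcons y a, k.+1); split => //; exists a; split => //.
    by rewrite -cats1.
  by right; split => //; rewrite cats1 in Hl.
right; exists (rcons y x, k); split; last first.
  by apply: IH; rewrite cat_rcons.
exists x; split => //; last by left.
by apply: (@dstar_prefix _ _ _ _ (rcons e a)); rewrite cat_rcons.
Qed.

End Phase1.

Lemma comp_bound R : #|[set q in QR A R | S q]| <=
  #|[set b | pb (lang_eq (lang_from B b) R)]|.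
Proof.
have [v0 Hv0] := connect_fpath (Hreach q1).
have [z0 Hz0] := S_live Sq1.
have : lang B (cat_word v0 z0) by apply/HLB/HLA; apply: lang_of_safe Hv0 Hz0.
case=> t0 [_ /(HB _) [c0 _]].
have [y [k [Hy Hst]]] := phase1 Hv0 c0.
case Eqs: (dstar A q1 y) Hy => [qs|//] _.
have Hv : fpath A (init A) (v0 ++ y) qs.
  exact: fpath_cat Hv0 (dstar_fpath Hsdet Eqs).
have Sqs : S qs := S_stay Sq1 Eqs.
have Hstuck : forall e a, dstar A qs (rcons e a) != None ->
    sched c0 k \notin labB ((v0 ++ y) ++ rcons e a).
  by move=> e a H; rewrite -catA; apply: Hst; rewrite dstar_cat Eqs.
pose f q := odflt (init B) [pick b | pb (Diag (v0 ++ y) qs (sched c0 k) q b)].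
have Hf : forall q, S q -> Diag (v0 ++ y) qs (sched c0 k) q (f q).
  move=> q Sq; have [b Hb] := C4 Hv Sqs Hstuck Sq.
  rewrite /f; case: pickP => [b' /pbP //|H].
  by move: (H b); rewrite (proj2 (pbP _) Hb).
rewrite -(@card_in_imset _ _ f).
  apply: subset_leq_card; apply/subsetP => _ /imsetP[q Hq ->].
  move: Hq; rewrite !inE => /andP[/pbP HqR Sq]; apply/pbP.
  exact: lang_eq_trans (Diag_lang Hv (Hf q Sq)) HqR.
move=> q q'; rewrite !inE => /andP[_ Sq] /andP[_ Sq'] E.
by apply: (C5 Hv Hstuck (Hf q Sq)); rewrite E; apply: Hf.
Qed.

End Comp.

Definition XB R := [set b : St B | pb (lang_eq (lang_from B b) R)].

Lemma res_bound u p0 :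
  #|[set q in QR A (residual L u) | same_safe_comp A p0 q]| <= #|XB (residual L u)|.
Proof.
case: (leqP #|[set q in QR A (residual L u) | same_safe_comp A p0 q]| 1) => H.
  apply: leq_trans H _; apply/card_gt0P; exists (stB u).
  by rewrite inE; apply/pbP; exact: stB_lang.
case/card_gt1P: H => q1 [q2 [H1 H2 H12]].
move: H1 H2; rewrite !inE => /andP[_ S1] /andP[_ S2].
exact: comp_bound H12 S1 S2 _.
Qed.

Lemma n_bound u : n_of A (residual L u) <= #|XB (residual L u)|.
Proof. by apply/bigmax_leqP => p _; apply: res_bound. Qed.

Definition U (us : seq (seq Sigma)) : {set St B} := \big[@setU _/set0]_(u <- us) XB (residual L u).

Lemma memU us b : b \in U us -> exists j, j < size us /\ b \in XB (residual L (nth [::] us j)).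
Proof.
elim: us => [|u us IH]; first by rewrite /U big_nil inE.
rewrite /U big_cons inE => /orP[Hb|/IH [j [Hj Hb]]]; first by exists 0.
by exists j.+1.
Qed.

Lemma sum_eq us : (forall i j, i < size us -> j < size us -> i != j ->
       ~ lang_eq (residual L (nth [::] us i)) (residual L (nth [::] us j))) ->
  \sum_(u <- us) #|XB (residual L u)| = #|U us|.
Proof.
elim: us => [|u us IH] H; first by rewrite big_nil /U big_nil cards0.
rewrite big_cons IH; last first.
  by move=> i j Hi Hj Hij; apply: (H i.+1 j.+1).
have Hd : XB (residual L u) :&: U us = set0.
  apply/setP => b; rewrite !inE; apply/negP => /andP[Hb /memU [j [Hj Hb2]]].
  apply: (H 0 j.+1) => //=.
  rewrite inE in Hb Hb2; move/pbP: Hb => Hb; move/pbP: Hb2 => Hb2.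
  exact: lang_eq_trans (lang_eq_sym Hb) Hb2.
by rewrite -cardsUI Hd cards0 addn0 /U big_cons.
Qed.

Lemma main_sum us : (forall i j, i < size us -> j < size us -> i != j ->
       ~ lang_eq (residual L (nth [::] us i)) (residual L (nth [::] us j))) ->
  \sum_(u <- us) n_of A (residual L u) <= #|St B|.
Proof.
move=> H; apply: leq_trans (_ : \sum_(u <- us) #|XB (residual L u)| <= _).
  by apply: leq_sum => u _; apply: n_bound.
by rewrite sum_eq // max_card.
Qed.

End Main.

Theorem proposition24 (Sigma C : finType) (L : word Sigma -> Prop)
    (B : automaton Sigma {set C}) (Amin : automaton Sigma {set unit}) :
  is_gen_coBuchi B -> history_deterministic B -> lang_eq (lang B) L ->
  is_coBuchi Amin -> history_deterministic Amin -> lang_eq (lang Amin) L ->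
  nice Amin -> safe_minimal Amin -> safe_centralised Amin ->
  forall us : seq (seq Sigma),
    (forall i j, i < size us -> j < size us -> i != j ->
       ~ lang_eq (residual L (nth [::] us i)) (residual L (nth [::] us j))) ->
    \sum_(u <- us) n_of Amin (residual L u) <= #|St B|.
Proof.
move=> HB [sB HsB] HLB HA [sA HsA] HLA Hnice Hmin Hcen us Hus.
exact: (main_sum HB HLB HA HLA Hnice Hmin Hcen HsB HsA Hus).
Qed.
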